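(* In the setting of the context, assume $q<q_c$, let $\beta\in(0,1)$, and suppose $\bar\delta(q)>0$ and $$N_q>\frac{\log(2/\beta)}{2\bar\delta(q)^2}.$$ Then with probability at least $1-\beta$ (over the samples) the following holds: if $\hat q<q_c$, then $\hat K$ mean-square stabilizes the system.
   Context: Let $A\in\mathbb{R}^{n\times n}$, $B\in\mathbb{R}^{n\times m}$ with $(A,B)$ stabilizable, and let $Q$, $R$ be symmetric positive definite. Consider $x_{t+1}=Ax_t+\lambda_tBu_t$, $t\ge0$, with $x_0$ random with finite mean and covariance and $\{\lambda_t\}$ i.i.d. Bernoulli, independent of $x_0$, with $\mathcal{P}(\lambda_t=0)=q$, $q\in(0,1)$ unknown. The estimate is $\hat q=\frac1{N_q}\sum_{i=1}^{N_q}(1-\lambda_i)$ from $N_q$ i.i.d. samples $\lambda_1,\dots,\lambda_{N_q}$ with the same Bernoulli law. For $p\in[0,1)$ the modified Riccati equation with parameter $p$ is $X=Q+A^\top XA-(1-p)A^\top XB(R+B^\top XB)^{-1}B^\top XA$; $q_c$ is the critical loss probability such that for every $p\in[0,q_c)$ this equation has a unique positive definite solution. For $\hat q\in[0,q_c)$ let $\hat P$ be the positive definite solution for parameter $\hat q$ and $\hat K=-(R+B^\top\hat PB)^{-1}B^\top\hat PA$; $\hat K$ mean-square stabilizes the system if the closed loop $x_{t+1}=(A+\lambda_tB\hat K)x_t$ satisfies $\lim_{t\to\infty}\mathbb{E}\{x_t^\top x_t\}=0$. Define $\mathcal C(q,\hat q)=Q+(1-q)\hat K^\top R\hat K-(q-\hat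 q)A^\top\hat PB(R+B^\top\hat PB)^{-1}B^\top\hat PA$ and the stability threshold $\bar\delta(q)=\sup\{\delta\ge0:\ \mathcal C(q,\hat q)\succ0 \text{ for all } \hat q\in[0,q_c)\text{ with } q-\hat q<\delta\}$. *)

(* Defs.v *)
From HB Require Import structures.
From mathcomp Require Import all_boot all_order all_algebra.
From mathcomp Require Import all_classical all_reals all_analysis.
Set Implicit Arguments. Unset Strict Implicit. Unset Printing Implicit Defensive.
Import Order.TTheory GRing.Theory Num.Theory.
Import numFieldNormedType.Exports.
Local Open Scope classical_set_scope.
Local Open Scope ring_scope.

Section Defs.
Variable R : realType.

Definition posdef (k : nat) (M : 'M[R]_k) : Prop :=
  M^T = M /\ forall x : 'cV[R]_k, x != 0 -> 0 < (x^T *m M *m x) 0 0.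

Definition stable_mx (n : nat) (M : 'M[R]_n) : Prop :=
  forall (x0 : 'cV[R]_n) (i : 'I_n),
    (fun t : nat => (iter t (mulmx M) x0) i 0) @ \oo --> (0 : R).

Definition stabilizable (n m : nat) (A : 'M[R]_n) (B : 'M[R]_(n, m)) : Prop :=
  exists K : 'M[R]_(m, n), stable_mx (A + B *m K).

Variables (n m : nat) (A : 'M[R]_n) (B : 'M[R]_(n, m)) (Q : 'M[R]_n) (Rw : 'M[R]_m).

Definition riccati_term (X : 'M[R]_n) : 'M[R]_n :=
  A^T *m X *m B *m invmx (Rw + B^T *m X *m B) *m B^T *m X *m A.

Definition mare (p : R) (X : 'M[R]_n) : 'M[R]_n :=
  Q + A^T *m X *m A - (1 - p) *: riccati_term X.

(* the positive definite solution of the MARE with parameter p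
   (unique for p in [0, q_c); chosen by xget) *)
Definition Phat (p : R) : 'M[R]_n :=
  xget 0 [set X | posdef X /\ X = mare p X].

Definition gain (P : 'M[R]_n) : 'M[R]_(m, n) :=
  - (invmx (Rw + B^T *m P *m B) *m B^T *m P *m A).

Fixpoint traj (K : 'M[R]_(m, n)) (lam : nat -> bool) (x0 : 'cV[R]_n) (t : nat)
  : 'cV[R]_n :=
  match t with
  | 0 => x0
  | t'.+1 => (A + (lam t')%:R *: (B *m K)) *m traj K lam x0 t'
  end.

Definition bern (q : R) (b : bool) : R := if b then 1 - q else q.

Definition msq_given_x0 (q : R) (K : 'M[R]_(m, n)) (x0 : 'cV[R]_n) (t : nat) : R :=
  \sum_(s : t.-tuple bool)
     (\prod_(i < t) bern q (tnth s i)) *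
     ((traj K (fun j => nth false s j) x0 t)^T *m traj K (fun j => nth false s j) x0 t) 0 0.

(* K mean-square stabilizes the closed loop: for every random initial state x0
   with finite mean and covariance (defined on an arbitrary probability space,
   independent of the i.i.d. Bernoulli losses, so that the joint law is the
   product law), lim_t E{x_t^T x_t} = 0. *)
Definition ms_stabilizes (q : R) (K : 'M[R]_(m, n)) : Prop :=
  forall (d : measure_display) (T : measurableType d) (P : probability T R)
         (x0 : T -> 'cV[R]_n),
    (forall i : 'I_n, measurable_fun setT (fun w => x0 w i 0)) ->
    (forall i : 'I_n, P.-integrable setT (fun w => ((x0 w i 0) ^+ 2)%:E)) ->
    (fun t : nat => (\int[P]_w (msq_given_x0 q K (x0 w) t)%:E)%E)
      @ \oo --> (0 : \bar R)%E.

Definition Cmat (q qh : R) : 'M[R]_n :=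
  Q + (1 - q) *: ((gain (Phat qh))^T *m Rw *m gain (Phat qh))
    - (q - qh) *: riccati_term (Phat qh).

(* stability threshold delta_bar(q) (in the extended reals: may be +oo) *)
Definition delta_bar (qc q : R) : \bar R :=
  ereal_sup [set (d%:E)%E | d in
    [set d : R | 0 <= d /\
       forall qh : R, 0 <= qh < qc -> q - qh < d -> posdef (Cmat q qh)]].

End Defs.

(* The sample-size condition N > log(2/beta) / (2 dbar^2), read in the
   extended reals: when dbar = +oo the right-hand side is 0. *)
Definition sample_cond (R : realType) (N : nat) (beta : R) (d : \bar R) : Prop :=
  match d with
  | EFin r => ln (2 / beta) / (2 * r ^+ 2) < N%:R
  | +oo%E => 0 < N%:R :> R
  | -oo%E => False
  end.

Definition qhat (R : realType) (N : nat) (s : N.-tuple bool) : R :=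
  (\sum_(i < N) (1 - ((tnth s i : nat)%:R : R))) / N%:R.

Definition sample_prob (R : realType) (q : R) (N : nat)
  (E : N.-tuple bool -> Prop) : R :=
  \sum_(s : N.-tuple bool | `[< E s >]) \prod_(i < N) bern q (tnth s i).

(* Main.v *)
Require Import Defs.
From HB Require Import structures.
From mathcomp Require Import all_boot all_order all_algebra.
From mathcomp Require Import all_classical all_reals all_analysis.
From mathcomp Require Import lra ring.
From mathcomp Require Import measurable_realfun.
Set Implicit Arguments. Unset Strict Implicit. Unset Printing Implicit Defensive.
Import Order.TTheory GRing.Theory Num.Theory.
Import numFieldNormedType.Exports.
Local Open Scope classical_set_scope.
Local Open Scope ring_scope.

Section Hoef.
Variable R : realType.

Lemma der_lin (c x : R) : is_derive x 1 (fun h : R => h * c) c.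
Proof.
change (is_derive x 1 ((@id R) * cst c) c).
apply: is_derive_eq.
by rewrite /GRing.scale/= mulr0 add0r mulr1.
Qed.

Lemma derE (c x : R) : is_derive x 1 (fun h => expR (h * c)) (expR (x * c) * c).
Proof.
exact: (@is_derive1_comp R expR (fun h => h * c) x _ _ (is_derive_expR _) (der_lin c x)).
Qed.

Lemma is_derive_ext (f g : R -> R) (x d : R) : (forall y, f y = g y) ->
  is_derive x 1 f d -> is_derive x 1 g d.
Proof. by move=> /funext ->. Qed.

Lemma nonincr_derive (f df : R -> R) (b : R) : 0 <= b ->
  (forall x : R, is_derive x 1 f (df x)) -> (forall x, 0 <= x <= b -> df x <= 0) ->
  f b <= f 0.
Proof.
move=> b0 fd dfn.
have cf : {within `[0, b], continuous f}.
  apply: derivable_within_continuous => x _; by case: (fd x).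
have [c cin E] := @MVT_segment R f df 0 b b0 (fun x _ => fd x) cf.
rewrite -subr_le0 E subr0.
move: cin; rewrite in_itv /= => cin.
by rewrite mulr_le0_ge0 // dfn.
Qed.

Lemma hoeffding_lemma (q h : R) : 0 < q < 1 -> 0 <= h ->
  q * expR (h * (q - 1)) + (1 - q) * expR (h * q) <= expR (h ^+ 2 / 8).
Proof.
move=> /andP[q0 q1] h0.
pose a (x : R) := q * expR (x * (q - 1)).
pose b (x : R) := (1 - q) * expR (x * q).
have a0 x : 0 < a x by rewrite /a mulr_gt0 ?expR_gt0.
have b0 x : 0 < b x by rewrite /b mulr_gt0 ?expR_gt0 // subr_gt0.
have da (x : R) : is_derive x 1 a ((q - 1) * a x).
  apply: (is_derive_eq (@is_derive_ext _ a _ _ _ (is_deriveZ q (@derE (q - 1) x)))).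
    by [].
  by rewrite /a /GRing.scale /=; ring.
have db (x : R) : is_derive x 1 b (q * b x).
  apply: (is_derive_eq (@is_derive_ext _ b _ _ _ (is_deriveZ (1 - q) (@derE q x)))).
    by [].
  by rewrite /b /GRing.scale /=; ring.
pose M x := a x + b x.
pose M1 x := (q - 1) * a x + q * b x.
have M0 x : 0 < M x by rewrite /M addr_gt0.
have dM (x : R) : is_derive x 1 M (M1 x).
  exact: (@is_derive_ext _ M _ _ _ (is_deriveD (da x) (db x))).
have dM1 (x : R) : is_derive x 1 M1 ((q - 1) ^+ 2 * a x + q ^+ 2 * b x).
  apply: (is_derive_eq (@is_derive_ext _ M1 _ _ _ (is_deriveD (is_deriveZ (q - 1) (da x)) (is_deriveZ q (db x))))).
    by [].
  by rewrite /GRing.scale /=; ring.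
pose r x := M1 x * (M x)^-1 - x / 4.
have dr (x : R) : is_derive x 1 r (a x * b x / (M x) ^+ 2 - 4^-1).
  have Mn : M x != 0 by rewrite gt_eqF.
  apply: (is_derive_eq (@is_derive_ext _ r _ _ _
     (is_deriveB (is_deriveM (dM1 x) (is_deriveV Mn (dM x))) (der_lin 4^-1 x)))).
    by [].
  rewrite /GRing.scale /= /M1 /M.
  have := M0 x; rewrite /M => Mx.
  field; by rewrite gt_eqF.
have r0 : r 0 = 0.
  have E : M1 0 = 0.
    rewrite /M1 /a /b /= mul0r mul0r expR0 !mulr1; ring.
  by rewrite /r E !mul0r subr0.
have rle (y : R) : 0 <= y -> M1 y <= y * 4^-1 * M y.
  move=> y0.
  have : r y <= r 0.
    apply: (@nonincr_derive r) => // x _.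
    rewrite subr_le0 ler_pdivrMr ?exprn_gt0 // -subr_ge0.
    have -> : 4^-1 * (M x) ^+ 2 - a x * b x = ((a x - b x) / 2) ^+ 2 by rewrite /M; field.
    exact: sqr_ge0.
  by rewrite r0 /r subr_le0 ler_pdivrMr // mulrC.
pose c : R := - 8^-1.
pose g x := expR (x * (x * c)) * M x.
have dp (x : R) : is_derive x 1 (fun h => h * (h * c)) (x * c + x * c).
  apply: (is_derive_eq (@is_derive_ext _ (fun h => h * (h * c)) _ _ _
     (is_deriveM (is_derive_id x 1) (der_lin c x)))).
    by [].
  by rewrite /GRing.scale /=; ring.
have dg (x : R) : is_derive x 1 g (expR (x * (x * c)) * (M1 x - x * 4^-1 * M x)).
  apply: (is_derive_eq (@is_derive_ext _ g _ _ _
     (is_deriveM (is_derive1_comp (is_derive_expR _) (dp x)) (dM x)))).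
    by [].
  by rewrite /GRing.scale /= /c; field.
have gle : g h <= g 0.
  apply: (@nonincr_derive g) => // x /andP[x0 _].
  by rewrite mulr_ge0_le0 ?expR_ge0 // subr_le0 rle.
have g0 : g 0 = 1.
  by rewrite /g /M /a /b !mul0r expR0 !mulr1 mul1r addrC subrK.
rewrite g0 /g in gle.
have -> : h ^+ 2 / 8 = - (h * (h * c)) by rewrite /c; field.
have E : M h = expR (- (h * (h * c))) * (expR (h * (h * c)) * M h).
  by rewrite mulrA -expRD addrC subrr expR0 mul1r.
rewrite -/(M h) E.
by rewrite -[X in _ <= X]mulr1 ler_wpM2l ?expR_ge0.
Qed.
End Hoef.

Section Cher.
Variable R : realType.
Local Notation hoeffding_lemma := (@hoeffding_lemma R).



Lemma tuple_prod_sum (N : nat) (F : 'I_N -> bool -> R) :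
  \sum_(s : N.-tuple bool) \prod_(i < N) F i (tnth s i) =
  \prod_(i < N) (F i true + F i false).
Proof.
have E i : F i true + F i false = \sum_(b : bool) F i b by rewrite big_bool.
under [RHS]eq_bigr do rewrite E.
rewrite (bigA_distr_bigA F) /=.
rewrite (reindex (fun s : N.-tuple bool => [ffun i => tnth s i])) /=.
  by apply: eq_bigr => s _; apply: eq_bigr => i _; rewrite ffunE.
exists (fun f : {ffun 'I_N -> bool} => [tuple f i | i < N]) => [s _|f _].
  by apply: eq_from_tnth => i; rewrite tnth_mktuple ffunE.
by apply/ffunP => i; rewrite ffunE tnth_mktuple.
Qed.

Lemma expR_sum (I : finType) (f : I -> R) :
  expR (\sum_i f i) = \prod_i expR (f i).
Proof. by apply: (big_morph _ (@expRD R) (@expR0 R)). Qed.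

Lemma bern_total (q : R) N : \sum_(s : N.-tuple bool) \prod_(i < N) bern q (tnth s i) = 1.
Proof.
rewrite (tuple_prod_sum (fun _ b => bern q b)) /bern.
by rewrite big1 // => i _; rewrite subrK.
Qed.

Lemma chernoff_tuple (q d : R) (N : nat) : 0 < q < 1 -> 0 < d -> (0 < N)%N ->
  \sum_(s : N.-tuple bool | `[< d <= q - qhat R s >]) \prod_(i < N) bern q (tnth s i)
    <= expR (- (2 * N%:R * d ^+ 2)).
Proof.
move=> /andP[q0 q1] d0 N0.
have N0' : 0 < N%:R :> R by rewrite ltr0n.
pose h := 4 * d.
pose Z (b : bool) : R := 1 - (b : nat)%:R.
pose w (s : N.-tuple bool) := \prod_(i < N) bern q (tnth s i).
have w0 s : 0 <= w s.
  apply: prodr_ge0 => i _; rewrite /bern; case: (tnth s i) => //; lra.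
apply: (@le_trans _ _ (\sum_(s : N.-tuple bool) w s *
    expR (h * (N%:R * q - \sum_(i < N) Z (tnth s i) - N%:R * d)))).
  rewrite [X in _ <= X](bigID (fun s => `[< d <= q - qhat R s >])) /= -[X in X <= _]addr0.
  apply: lerD; last by apply: sumr_ge0 => s _; rewrite mulr_ge0 ?expR_ge0.
  apply: ler_sum => s /asboolP Hs; rewrite -[X in X <= _]mulr1 ler_wpM2l //; first exact: (w0 s).
  apply: (@le_trans _ _ (expR 0)); first by rewrite expR0.
  rewrite ler_expR mulr_ge0 //; first by rewrite /h; lra.
  have HS : \sum_(i < N) Z (tnth s i) = qhat R s * N%:R.
    by rewrite /qhat /Z divfK // gt_eqF.
  rewrite HS.
  have -> : N%:R * q - qhat R s * N%:R - N%:R * d = N%:R * (q - qhat R s - d) by ring.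
  apply: mulr_ge0; [exact: ltW | lra].
pose F (b : bool) := bern q b * expR (h * (q - Z b)).
have E1 s : w s * expR (h * (N%:R * q - \sum_(i < N) Z (tnth s i) - N%:R * d)) =
    expR (- (h * N%:R * d)) * \prod_(i < N) F (tnth s i).
  have -> : h * (N%:R * q - \sum_(i < N) Z (tnth s i) - N%:R * d) =
      - (h * N%:R * d) + \sum_(i < N) h * (q - Z (tnth s i)).
    have ES : \sum_(i < N) (q - Z (tnth s i)) = N%:R * q - \sum_(i < N) Z (tnth s i).
      by rewrite sumrB sumr_const card_ord mulr_natl.
    rewrite -mulr_sumr ES; ring.
  by rewrite expRD expR_sum /w /F big_split /= mulrCA.
under eq_bigr do rewrite E1.
rewrite -mulr_sumr (tuple_prod_sum (fun _ b => F b)) prodr_const card_ord.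
have hM : F true + F false <= expR (h ^+ 2 / 8).
  have := @hoeffding_lemma q h ltac:(by rewrite q0 q1) ltac:(by rewrite /h; lra).
  rewrite /F /bern /Z /= !subr0 addrC.
  have -> : q - (1 - 1) = q by ring.
  by [].
have M0 : 0 <= F true + F false.
  by rewrite /F /bern addr_ge0 // mulr_ge0 ?expR_ge0 //; lra.
apply: (@le_trans _ _ (expR (- (h * N%:R * d)) * expR (h ^+ 2 / 8) ^+ N)).
  by rewrite ler_wpM2l ?expR_ge0 // lerXn2r // ?nnegrE ?expR_ge0.
by rewrite -expRM_natr -expRD /h le_eqVlt; apply/orP; left; apply/eqP; congr expR; field.
Qed.
End Cher.

Section Mx.
Variable R : realType.

Definition qf k (X : 'M[R]_k) (x : 'cV[R]_k) : R := (x^T *m X *m x) 0 0.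

Lemma posdef_unit k (X : 'M[R]_k) : posdef X -> X \in unitmx.
Proof.
move=> [XT Xp]; rewrite -row_free_unit -kermx_eq0; apply/negPn/negP => Hk.
have [i Hi] : exists i, row i (kermx X) != 0.
  apply/existsP; move: Hk; apply: contraR; rewrite negb_exists => /forallP H.
  apply/eqP/row_matrixP => i; rewrite row0; apply/eqP; exact/negbNE/H.
have := Xp (row i (kermx X))^T; rewrite trmx_eq0 => /(_ Hi).
by rewrite trmxK -row_mul mulmx_ker row0 mul0mx mxE ltxx.
Qed.

Lemma qf_ge0 k (X : 'M[R]_k) x : posdef X -> 0 <= qf X x.
Proof.
move=> [_ Xp]; have [->|x0] := eqVneq x 0.
  by rewrite /qf mulmx0 mxE.
exact/ltW/Xp.
Qed.


Definition ssq k (x : 'cV[R]_k) : R := (x^T *m x) 0 0.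
Definition bf k (X : 'M[R]_k) (u x : 'cV[R]_k) : R := (u^T *m X *m x) 0 0.

Lemma qfE k (X : 'M[R]_k) x : qf X x = \sum_i \sum_j x i 0 * X i j * x j 0.
Proof.
rewrite /qf mxE exchange_big /=; apply: eq_bigr => j _; rewrite mxE mulr_suml.
by apply: eq_bigr => i _; rewrite mxE.
Qed.

Lemma ssqE k (x : 'cV[R]_k) : ssq x = \sum_i x i 0 ^+ 2.
Proof. by rewrite /ssq mxE; apply: eq_bigr => i _; rewrite mxE expr2. Qed.

Lemma ssq_ge0 k (x : 'cV[R]_k) : 0 <= ssq x.
Proof. by rewrite ssqE sumr_ge0 // => i _; rewrite sqr_ge0. Qed.

Lemma sq_le_ssq k (x : 'cV[R]_k) i : x i 0 ^+ 2 <= ssq x.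
Proof.
rewrite ssqE (bigD1 i) //= lerDl; apply: sumr_ge0 => j _; exact: sqr_ge0.
Qed.

Lemma qf_upper k (X : 'M[R]_k) x :
  qf X x <= (\sum_i \sum_j `|X i j|) * ssq x.
Proof.
rewrite qfE mulr_suml; apply: ler_sum => i _; rewrite mulr_suml; apply: ler_sum => j _.
apply: (le_trans (ler_norm _)).
rewrite !normrM mulrAC mulrC ler_wpM2l //.
have H1 := sq_le_ssq x i; have H2 := sq_le_ssq x j.
have : 2 * (`|x i 0| * `|x j 0|) <= x i 0 ^+ 2 + x j 0 ^+ 2.
  rewrite -[x i 0 ^+ 2]real_normK ?num_real // -[x j 0 ^+ 2]real_normK ?num_real //.
  rewrite -subr_ge0; set a := `|x i 0|; set b := `|x j 0|.
  have -> : a ^+ 2 + b ^+ 2 - 2 * (a * b) = (a - b) ^+ 2 by ring.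
  exact: sqr_ge0.
lra.
Qed.

Lemma qf_lin k (X Y : 'M[R]_k) a b x :
  qf (a *: X + b *: Y) x = a * qf X x + b * qf Y x.
Proof.
by rewrite /qf mulmxDr mulmxDl -!scalemxAr -!scalemxAl !mxE.
Qed.

Lemma qf_sub k (X Y : 'M[R]_k) x : qf (X - Y) x = qf X x - qf Y x.
Proof. by rewrite /qf mulmxBr mulmxBl !mxE. Qed.

Lemma qf_mul k l (M : 'M[R]_(k, l)) (X : 'M[R]_k) x : qf X (M *m x) = qf (M^T *m X *m M) x.
Proof. by rewrite /qf trmx_mul !mulmxA. Qed.

Lemma bf_sym k (X : 'M[R]_k) u x : X^T = X -> bf X x u = bf X u x.
Proof.
move=> XT; rewrite /bf -[in LHS](trmxK (x^T *m X *m u)) mxE.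
by rewrite !trmx_mul trmxK XT mulmxA.
Qed.

Lemma cauchy_schwarz k (X : 'M[R]_k) u x : posdef X ->
  bf X u x ^+ 2 <= qf X u * qf X x.
Proof.
move=> PX; have [XT Xp] := PX.
have [->|x0] := eqVneq x 0.
  by rewrite /bf /qf !mulmx0 mxE expr0n /= mulr_ge0 // ?lexx // (qf_ge0 _ PX).
have c0 : 0 < qf X x by exact: Xp.
set b := bf X u x; set c := qf X x.
have := qf_ge0 (u - (b / c) *: x) PX.
have -> : qf X (u - (b / c) *: x) = qf X u - 2 * (b / c) * b + (b / c) ^+ 2 * c.
  rewrite /qf /b /c.
  have -> : (u - (bf X u x / qf X x) *: x)^T = u^T - (bf X u x / qf X x) *: x^T.
    by apply/matrixP => i j; rewrite !mxE.
  rewrite !mulmxBr !mulmxBl -!scalemxAr -!scalemxAl.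
  have Hs := bf_sym u x XT; rewrite /bf in Hs.
  move: Hs; rewrite /bf /qf.
  set m1 := u^T *m X *m u; set m2 := x^T *m X *m u.
  set m3 := u^T *m X *m x; set m4 := x^T *m X *m x.
  clearbody m1 m2 m3 m4; move=> Hs; rewrite !mxE Hs; ring.
move=> H.
have : 0 <= (qf X u - 2 * (b / c) * b + (b / c) ^+ 2 * c) * c by rewrite mulr_ge0 // ltW.
have -> : (qf X u - 2 * (b / c) * b + (b / c) ^+ 2 * c) * c = qf X u * c - b ^+ 2.
  by field; rewrite gt_eqF.
by rewrite subr_ge0.
Qed.

Lemma qf_lower k (X : 'M[R]_k) : posdef X ->
  exists c : R, 0 < c /\ forall x, ssq x <= c * qf X x.
Proof.
move=> PX; have [XT Xp] := PX; have Xu := posdef_unit PX.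
pose u (i : 'I_k) : 'cV[R]_k := invmx X *m delta_mx i 0.
have bu i x : bf X (u i) x = x i 0.
  rewrite /bf /u trmx_mul trmx_delta trmx_inv XT -!mulmxA mulmxA.
  by rewrite -mulmxA (mulmxA (invmx X)) mulVmx // mul1mx -rowE mxE.
exists (1 + \sum_i qf X (u i)); split.
  by rewrite ltr_pwDl // sumr_ge0 // => i _; exact: qf_ge0.
move=> x; rewrite ssqE mulrDl mul1r.
apply: (@le_trans _ _ (\sum_i qf X (u i) * qf X x)); last first.
  by rewrite -mulr_suml lerDr qf_ge0.
apply: ler_sum => i _; rewrite -bu; exact: cauchy_schwarz.
Qed.

Lemma lin_id k (X T U Q P : 'M[R]_k) (q qh : R) : P = Q + X - (1 - qh) *: T ->
  q *: X + (1 - q) *: (X - T - U) = P - (Q + (1 - q) *: U - (q - qh) *: T).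
Proof. move=> ->; apply/matrixP => i j; rewrite !mxE; ring. Qed.

Section Lyap.
Variables (n m : nat) (A : 'M[R]_n) (B : 'M[R]_(n, m)) (Q : 'M[R]_n) (Rw : 'M[R]_m).
Variables (P : 'M[R]_n) (q qh : R).
Hypothesis RwT : Rw^T = Rw.
Hypothesis PT : P^T = P.
Hypothesis Gu : (Rw + B^T *m P *m B) \in unitmx.
Hypothesis Peq : P = mare A B Q Rw qh P.

Local Notation G := (Rw + B^T *m P *m B).
Local Notation Gi := (invmx G).
Local Notation L := (B^T *m P *m A).
Local Notation K := (gain A B Rw P).
Local Notation T := (riccati_term A B Rw P).
Local Notation U := (K^T *m Rw *m K).

Lemma GT : G^T = G.
Proof. by rewrite linearD /= RwT !trmx_mul trmxK PT mulmxA. Qed.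

Lemma GiT : Gi^T = Gi.
Proof. by rewrite trmx_inv GT. Qed.

Lemma KE : K = - (Gi *m L).
Proof. by rewrite /gain !mulmxA. Qed.

Lemma KTE : K^T = - (L^T *m Gi).
Proof. by rewrite KE linearN /= trmx_mul GiT. Qed.

Lemma LTE : L^T = A^T *m P *m B.
Proof. by rewrite !trmx_mul trmxK PT mulmxA. Qed.

Lemma TE : T = L^T *m Gi *m L.
Proof. by rewrite /riccati_term LTE !mulmxA. Qed.

Lemma closed_loop :
  (A + B *m K)^T *m P *m (A + B *m K) = A^T *m P *m A - T - U.
Proof.
have E1 : A^T *m P *m (B *m K) = - T.
  by rewrite KE TE LTE !mulmxN !mulmxA.
have E2 : (B *m K)^T *m P *m A = - T.
  by rewrite trmx_mul KTE TE !mulNmx !mulmxA.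
have E3 : (B *m K)^T *m P *m (B *m K) = T - U.
  rewrite trmx_mul KTE KE TE !mulNmx !mulmxN !opprK.
  have -> : L^T *m Gi *m L = L^T *m Gi *m (G *m Gi) *m L.
    by rewrite mulmxV // mulmx1.
  by rewrite mulmxDl mulmxDr !mulmxDl !mulmxA addrAC subrr add0r.
have -> : (A + B *m K)^T = A^T + (B *m K)^T by apply/matrixP => i j; rewrite !mxE.
by rewrite !mulmxDl !mulmxDr E1 E2 E3 addKr.
Qed.

Definition Cm := Q + (1 - q) *: U - (q - qh) *: T.

Lemma lyap_mx :
  q *: (A^T *m P *m A) + (1 - q) *: ((A + B *m K)^T *m P *m (A + B *m K)) = P - Cm.
Proof. rewrite closed_loop /Cm; apply: lin_id; exact: Peq. Qed.

Lemma lyap_qf x :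
  q * qf P (A *m x) + (1 - q) * qf P ((A + B *m K) *m x) = qf P x - qf Cm x.
Proof. by rewrite !qf_mul -qf_lin lyap_mx qf_sub. Qed.

End Lyap.

Lemma sum_tuple_succ t (G : t.+1.-tuple bool -> R) :
  \sum_(s : t.+1.-tuple bool) G s =
  \sum_(b : bool) \sum_(s : t.-tuple bool) G [tuple of b :: s].
Proof.
rewrite pair_bigA /=.
rewrite (reindex (fun p : bool * t.-tuple bool => [tuple of p.1 :: p.2])) //=.
exists (fun s : t.+1.-tuple bool => (thead s, [tuple of behead s])) => [[b s] _|s _].
  by congr pair; apply: val_inj.
by rewrite [in RHS](tuple_eta s).
Qed.

Section Stoch.
Variables (n m : nat) (A : 'M[R]_n) (B : 'M[R]_(n, m)) (K : 'M[R]_(m, n)) (q : R).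

Definition Fb (b : bool) : 'M[R]_n := A + (b : nat)%:R *: (B *m K).

Definition Ex t (f : 'cV[R]_n -> R) (x0 : 'cV[R]_n) : R :=
  \sum_(s : t.-tuple bool) (\prod_(i < t) bern q (tnth s i)) *
     f (traj A B K (fun j => nth false s j) x0 t).

Lemma traj_shift lam x0 t :
  traj A B K lam x0 t.+1 = traj A B K (fun j => lam j.+1) (Fb (lam 0%N) *m x0) t.
Proof.
elim: t => [//|t IH].
change (traj A B K lam x0 t.+2) with
  ((A + (lam t.+1 : nat)%:R *: (B *m K)) *m traj A B K lam x0 t.+1).
by rewrite IH.
Qed.

Lemma Ex_succ t f x0 :
  Ex t.+1 f x0 = \sum_(b : bool) bern q b * Ex t f (Fb b *m x0).
Proof.
rewrite /Ex sum_tuple_succ; apply: eq_bigr => b _; rewrite mulr_sumr.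
apply: eq_bigr => s _; rewrite big_ord_recl traj_shift /= -mulrA; congr (_ * (_ * _)).
by apply: eq_bigr => i _; rewrite !(tnth_nth false).
Qed.

Lemma bern_ge0 b : 0 <= q <= 1 -> 0 <= bern q b.
Proof. by move=> /andP[q0 q1]; rewrite /bern; case: b => //; rewrite subr_ge0. Qed.

Lemma Ex_le t f g x0 : 0 <= q <= 1 -> (forall x, f x <= g x) -> Ex t f x0 <= Ex t g x0.
Proof.
move=> q01 fg; apply: ler_sum => s _; rewrite ler_wpM2l //.
by apply: prodr_ge0 => i _; exact: bern_ge0.
Qed.

Lemma Ex_scale t c f x0 : Ex t (fun x => c * f x) x0 = c * Ex t f x0.
Proof. by rewrite /Ex mulr_sumr; apply: eq_bigr => s _; rewrite mulrCA. Qed.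

Lemma Ex0 f x0 : Ex 0 f x0 = f x0.
Proof.
rewrite /Ex (eq_bigr (fun _ => f x0)); last by move=> s _; rewrite big_ord0 mul1r.
by rewrite sumr_const card_tuple expn0.
Qed.

Lemma Ex_msq x0 t : msq_given_x0 A B q K x0 t = Ex t (fun x => ssq x) x0.
Proof. by []. Qed.

End Stoch.

Lemma qf_add k (X Y : 'M[R]_k) x : qf (X + Y) x = qf X x + qf Y x.
Proof. by rewrite /qf mulmxDr mulmxDl !mxE. Qed.

Lemma Fb0 n m (A : 'M[R]_n) (B : 'M[R]_(n, m)) K : Fb A B K false = A.
Proof. by rewrite /Fb /= scale0r addr0. Qed.

Lemma Fb1 n m (A : 'M[R]_n) (B : 'M[R]_(n, m)) K : Fb A B K true = A + B *m K.
Proof. by rewrite /Fb /= scale1r. Qed.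

Section Decay.
Variables (n m : nat) (A : 'M[R]_n) (B : 'M[R]_(n, m)) (Q : 'M[R]_n) (Rw : 'M[R]_m).
Variables (P : 'M[R]_n) (q qh : R).
Hypothesis PRw : posdef Rw.
Hypothesis PP : posdef P.
Hypothesis Peq : P = mare A B Q Rw qh P.
Hypothesis q01 : 0 < q < 1.
Hypothesis PC : posdef (Cm A B Q Rw P q qh).

Lemma G_posdef : posdef (Rw + B^T *m P *m B).
Proof.
have [RT Rp] := PRw; have [PT Pp] := PP.
split; first by rewrite linearD /= RT !trmx_mul trmxK PT mulmxA.
move=> x x0; rewrite -/(qf _ x) qf_add -qf_mul.
apply: (lt_le_trans (Rp x x0)); rewrite -/(qf Rw x) lerDl; exact: qf_ge0.
Qed.

Lemma decay : exists D rho : R, [/\ 0 <= D, 0 <= rho, rho < 1 &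
  forall x0 t, msq_given_x0 A B q (gain A B Rw P) x0 t <= D * rho ^+ t * ssq x0].
Proof.
have [RT _] := PRw; have [PT _] := PP.
have Gu := posdef_unit G_posdef.
set K := gain A B Rw P.
set C := Cm A B Q Rw P q qh.
have [cC [cC0 HC]] := qf_lower PC.
have [cP [cP0 HP]] := qf_lower PP.
set SP := \sum_i \sum_j `|P i j|.
have SP0 : 0 <= SP by apply: sumr_ge0 => i _; apply: sumr_ge0 => j _.
set eps := (1 + SP * cC)^-1.
have e0 : 0 < eps by rewrite invr_gt0 ltr_pwDl // mulr_ge0 // ltW.
have e1 : eps * (SP * cC) <= 1.
  rewrite /eps mulrC ler_pdivrMr ?mul1r ?lerDr //.
  by rewrite ltr_pwDl // mulr_ge0 // ltW.
set rho := 1 - eps.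
have q01' : 0 <= q <= 1 by move: q01 => /andP[? ?]; apply/andP; split; apply: ltW.
have step x : \sum_(b : bool) bern q b * qf P (Fb A B K b *m x) <= rho * qf P x.
  rewrite big_bool /= Fb0 Fb1 /bern addrC.
  rewrite (lyap_qf q RT PT Gu Peq) -/C /rho mulrBl mul1r lerD2l lerN2.
  have h1 := qf_upper P x; have h2 := HC x; have h3 := qf_ge0 x PC.
  apply: (le_trans (ler_wpM2l (ltW e0) h1)).
  apply: (le_trans (ler_wpM2l (ltW e0) (ler_wpM2l SP0 h2))).
  by rewrite mulrA mulrA -(mulrA eps) ler_piMl.
have rho0 : 0 <= rho.
  rewrite /rho subr_ge0 /eps invf_le1; last by rewrite ltr_pwDl // mulr_ge0 // ltW.
  by rewrite lerDl mulr_ge0 // ltW.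
have EV t : forall x0, Ex A B K q t (qf P) x0 <= rho ^+ t * qf P x0.
  elim: t => [|t IH] x0; first by rewrite Ex0 expr0 mul1r.
  rewrite Ex_succ.
  apply: (@le_trans _ _ (\sum_(b : bool) bern q b * (rho ^+ t * qf P (Fb A B K b *m x0)))).
    by apply: ler_sum => b _; rewrite ler_wpM2l ?bern_ge0.
  under eq_bigr do rewrite mulrCA.
  rewrite -mulr_sumr exprS mulrAC.
  by rewrite [X in _ <= X]mulrC ler_wpM2l ?exprn_ge0 // step.
exists (cP * SP), rho; split.
- by rewrite mulr_ge0 // ltW.
- exact: rho0.
- by rewrite /rho ltrBlDr ltrDl.
move=> x0 t; rewrite Ex_msq.
apply: (@le_trans _ _ (Ex A B K q t (fun x => cP * qf P x) x0)).
  exact: Ex_le.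
rewrite Ex_scale -!mulrA; apply: ler_wpM2l; first exact: ltW.
apply: (le_trans (EV t x0)); rewrite mulrCA; apply: ler_wpM2l.
  exact: exprn_ge0.
exact: qf_upper.
Qed.

End Decay.
Section Integ.
Variables (n m : nat) (A : 'M[R]_n) (B : 'M[R]_(n, m)) (K : 'M[R]_(m, n)) (q : R).

Fixpoint trajM (lam : nat -> bool) t : 'M[R]_n :=
  match t with 0 => 1%:M | t'.+1 => Fb A B K (lam t') *m trajM lam t' end.

Lemma trajE lam x0 t : traj A B K lam x0 t = trajM lam t *m x0.
Proof. by elim: t => [|t IH] /=; [rewrite mul1mx | rewrite IH mulmxA]. Qed.

Lemma msq_ge0 x0 t : 0 <= q <= 1 -> 0 <= msq_given_x0 A B q K x0 t.
Proof.
move=> q01; rewrite Ex_msq; apply: sumr_ge0 => s _; apply: mulr_ge0.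
  by apply: prodr_ge0 => i _; exact: bern_ge0.
exact: ssq_ge0.
Qed.

Lemma msq_meas d (T : measurableType d) (x0 : T -> 'cV[R]_n) t :
  (forall i : 'I_n, measurable_fun setT (fun w => x0 w i 0)) ->
  measurable_fun setT (fun w => msq_given_x0 A B q K (x0 w) t).
Proof.
move=> mx.
apply: measurable_sum => s.
apply: (measurable_funM (f := cst _)); first exact: measurable_cst.
rewrite (_ : (fun w => ssq _) = (fun w => \sum_(k < n)
   (\sum_(j < n) trajM (fun j => nth false s j) t k j * x0 w j 0) *
   (\sum_(j < n) trajM (fun j => nth false s j) t k j * x0 w j 0))); last first.
  by apply/funext => w; rewrite trajE ssqE; apply: eq_bigr => k _; rewrite expr2 mxE.
apply: measurable_sum => k.
have mk : measurable_fun setT (fun w => \sum_(j < n) trajM (fun j => nth false s j) t k j * x0 w j 0).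
  apply: measurable_sum => j.
  apply: (measurable_funM (f := cst _)); first exact: measurable_cst.
  exact: mx.
exact: measurable_funM.
Qed.

Lemma ms_of_bound : 0 <= q <= 1 ->
  (exists D rho : R, [/\ 0 <= D, 0 <= rho, rho < 1 &
    forall x0 t, msq_given_x0 A B q K x0 t <= D * rho ^+ t * ssq x0]) ->
  ms_stabilizes A B q K.
Proof.
move=> q01 [D [rho [D0 r0 r1 Hb]]] d T P x0 mx ix.
pose g w := ssq (x0 w).
have gE : (fun w => (g w)%:E) = (fun w => \sum_(i < n) ((x0 w i 0) ^+ 2)%:E).
  by apply/funext => w; rewrite sumEFin /g ssqE.
have ig : P.-integrable setT (fun w => (g w)%:E).
  by rewrite gE; apply: (integrable_sum measurableT) => i _; exact: ix.
have mg : measurable_fun setT (fun w => (g w)%:E) by case/integrableP: ig.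
have If := integrable_fin_num measurableT ig.
set I := (\int[P]_w (g w)%:E)%E in If.
have I0 : (0 <= I)%E by apply: integral_ge0 => w _; rewrite lee_fin /g ssq_ge0.
apply: (@squeeze_cvge _ _ _ _ (fun _ => 0%E) _ (fun t => ((D * rho ^+ t)%:E * I)%E)).
- apply: filterE => t; apply/andP; split.
    by apply: integral_ge0 => w _; rewrite lee_fin msq_ge0.
  rewrite -ge0_integralZl_EFin //; last by rewrite mulr_ge0 // exprn_ge0.
    apply: ge0_le_integral => //.
    + by move=> w _; rewrite lee_fin msq_ge0.
    + by apply/measurable_EFinP; exact: msq_meas.
    + exact: measurable_funeM.
    + by move=> w _; rewrite -EFinM lee_fin Hb.
  by move=> w _; rewrite lee_fin /g ssq_ge0.
- exact: cvg_cst.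
- rewrite -(fineK If).
  have -> : (fun t => ((D * rho ^+ t)%:E * (fine I)%:E)%E) =
      (fun t => (geometric (D * fine I) rho t)%:E).
    by apply/funext => t; rewrite -EFinM /geometric mulrAC.
  apply: cvg_EFin; first by apply: filterE.
  apply: cvg_geometric; by rewrite ger0_norm.
Qed.

End Integ.

End Mx.

Lemma qhat_ge0 (R : realType) N (s : N.-tuple bool) : 0 <= qhat R s.
Proof.
rewrite /qhat divr_ge0 // sumr_ge0 // => i _.
by case: (tnth s i) => /=; rewrite ?subrr ?subr0.
Qed.

Theorem lemma3 (R : realType) (n m : nat) (A : 'M[R]_n) (B : 'M[R]_(n, m))
  (Q : 'M[R]_n) (Rw : 'M[R]_m) (qc q beta : R) (N : nat) :
  stabilizable A B -> posdef Q -> posdef Rw ->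
  0 < qc <= 1 ->
  (forall p : R, 0 <= p < qc ->
     exists! X : 'M[R]_n, posdef X /\ X = mare A B Q Rw p X) ->
  0 < q < 1 -> q < qc ->
  0 < beta < 1 ->
  (0 < delta_bar A B Q Rw qc q)%E ->
  sample_cond N beta (delta_bar A B Q Rw qc q) ->
  1 - beta <=
    sample_prob q (fun s : N.-tuple bool =>
      qhat R s < qc ->
      ms_stabilizes A B q (gain A B Rw (Phat A B Q Rw (qhat R s)))).
Proof.
move=> _ PQ PRw /andP[qc0 qc1] Huniq q01 qqc /andP[b0 b1] dpos scond.
have q01' : 0 <= q <= 1 by case/andP: q01 => ? ?; apply/andP; split; apply: ltW.
set db := delta_bar A B Q Rw qc q in dpos scond.
set E := (fun s : N.-tuple bool => _).
have good (s : N.-tuple bool) : ((q - qhat R s)%:E < db)%E -> E s.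
  move=> lt qlt.
  have qh0 := qhat_ge0 R s.
  have [_ [d [d0 Hd] <-] qd] := ereal_sup_gt lt.
  have PC := Hd (qhat R s) ltac:(by rewrite qh0 qlt) ltac:(by rewrite lte_fin in qd).
  have [X [[PX EX] _]] := Huniq (qhat R s) ltac:(by rewrite qh0 qlt).
  have [HP1 HP2] : posdef (Phat A B Q Rw (qhat R s)) /\
      Phat A B Q Rw (qhat R s) = mare A B Q Rw (qhat R s) (Phat A B Q Rw (qhat R s)).
    exact: (@xgetPex _ (0 : 'M[R]_n) [set Y | posdef Y /\ Y = mare A B Q Rw (qhat R s) Y]
      (ex_intro _ X (conj PX EX))).
  exact: (ms_of_bound q01' (decay PRw HP1 HP2 q01 PC)).
have mono (G : N.-tuple bool -> Prop) : (forall s, G s -> E s) ->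
    sample_prob q G <= sample_prob q E.
  move=> GE; rewrite /sample_prob [leLHS]big_mkcond [leRHS]big_mkcond /=.
  apply: ler_sum => s _.
  case: asboolP => Gs; case: asboolP => Es //.
    by case: (Es (GE s Gs)).
  by apply: prodr_ge0 => i _; rewrite /bern; case: (tnth s i) => //; lra.
have compl (G : N.-tuple bool -> Prop) :
    sample_prob q G = 1 - sample_prob q (fun s => ~ G s).
  have T := bern_total q N; rewrite (bigID (fun s => `[< G s >])) /= in T.
  have E2 : \sum_(s : N.-tuple bool | `[< ~ G s >]) \prod_(i < N) bern q (tnth s i) =
      \sum_(s : N.-tuple bool | ~~ `[< G s >]) \prod_(i < N) bern q (tnth s i).
    by apply: eq_bigl => s; rewrite asbool_neg.
  rewrite /sample_prob E2; lra.
clearbody E db.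
move: dpos scond good; case: db => [r| |] //= r0 scond good.
- rewrite lte_fin in r0.
  have lnpos : 0 < ln (2 / beta).
    by apply: ln_gt0; rewrite ltr_pdivlMr // mul1r; lra.
  have r2 : 0 < 2 * r ^+ 2 by rewrite mulr_gt0 // exprn_gt0.
  have N0 : (0 < N)%N.
    by rewrite -(ltr0n R); apply: lt_trans scond; rewrite divr_gt0.
  have hN : ln (2 / beta) < N%:R * (2 * r ^+ 2) by rewrite -ltr_pdivrMr.
  have hexp : expR (- (2 * N%:R * r ^+ 2)) <= beta.
    apply: (@le_trans _ _ (expR (- ln (2 / beta)))).
      rewrite ler_expR lerN2.
      have -> : 2 * N%:R * r ^+ 2 = N%:R * (2 * r ^+ 2) by ring.
      exact: ltW.
    rewrite expRN lnK ?posrE ?divr_gt0 // invf_div ler_pdivrMr //; lra.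
  apply: (le_trans _ (mono (fun s => q - qhat R s < r) _)); last first.
    by move=> s H; apply: good; rewrite lte_fin.
  rewrite compl lerB // (_ : sample_prob q _ =
      \sum_(s : N.-tuple bool | `[< r <= q - qhat R s >]) \prod_(i < N) bern q (tnth s i)).
    exact: (le_trans (chernoff_tuple q01 r0 N0) hexp).
  rewrite /sample_prob; apply: eq_bigl => s.
  by rewrite asbool_neg !asboolb -leNgt.
- apply: (le_trans _ (mono (fun _ => True) _)); last first.
    by move=> s _; apply: good; rewrite ltry.
  rewrite /sample_prob (eq_bigl (fun _ => true)); last by move=> s; rewrite asboolT.
  by rewrite bern_total lerBlDr lerDl ltW.
Qed.
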